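(* Let $\mathrm{Cl}_{p,q}$ be the real Clifford algebra with generators $e_1,\dots,e_n$ ($n=p+q$) satisfying $e_ie_j=-e_je_i$ for $i\neq j$ and $e_i^2=\sigma_i\in\{1,-1\}$. Let $s\ge 1$ and let $A\in\mathrm{Cl}_{p,q}$ be a multivector lying in $\mathrm{span}[e_1,\dots,e_s]$, i.e. $A$ is a real linear combination of blades $e_S=e_{j_1}e_{j_2}\cdots e_{j_m}$ with $j_1<\dots<j_m$ in $\{1,\dots,s\}$ (so the maximal grade $r$ of $A$ satisfies $r\le s$). Put $k=2^{\lceil s/2\rceil}$. Define $m_0=1$ and, for $i=1,\dots,k$, \[ c_i=-\frac{k}{i}\,\langle A\,m_{i-1}\rangle_0,\qquad m_i=A\,m_{i-1}+c_i . \] Then the procedure terminates at step $k$ with $m_k=0$, i.e. $A\,m_{k-1}=-c_k$. Consequently, if $c_k\neq 0$ then $A$ is invertible and \[ A^{-1}=-\frac{m_{k-1}}{c_k}, \] while if $c_k=0$ the inverse of $A$ does not exist. The (reduced) characteristic polynomial of $A$ is \[ p_A(\lambda)=\lambda^k+c_1\lambda^{k-1}+\dots+c_{k-1}\lambda+c_k . \]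
   Context: $\langle X\rangle_0$ denotes the scalar (grade-0) part of a multivector $X$; the scalar product of multivectors is $X\ast Y=\langle XY\rangle_0$, so $c_i=-\frac{k}{i}\,A\ast m_{i-1}$. Adding a real number $c$ to a multivector means adding $c$ times the unit $1$. Products are Clifford products. The algebra is non-degenerate (every generator squares to $+1$ or $-1$). *)

(* Defs.v *)
From HB Require Import structures.
From mathcomp Require Import all_boot all_order all_algebra.
Set Implicit Arguments. Unset Strict Implicit. Unset Printing Implicit Defensive.
Import Order.TTheory GRing.Theory Num.Theory.
Local Open Scope ring_scope.

Section Clifford.
Variables (R : realFieldType) (n : nat) (sig : 'I_n -> bool).

(* A multivector: coefficient of the blade e_S for every S ⊆ {0..n-1}. *)
Local Notation mv := {ffun {set 'I_n} -> R}.

Definition gsq (i : 'I_n) : R := if sig i then 1 else -1.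

(* e_S e_T = blade_sign S T * e_{S Δ T}  (blades ordered by increasing index) *)
Definition blade_sign (S T : {set 'I_n}) : R :=
  (-1) ^+ #|[set ij : 'I_n * 'I_n | (ij.1 \in S) && (ij.2 \in T) && (ij.2 < ij.1)%N]|
  * \prod_(i in S :&: T) gsq i.

Definition symdiff (S T : {set 'I_n}) : {set 'I_n} := (S :\: T) :|: (T :\: S).

Definition cmul (A B : mv) : mv :=
  [ffun U => \sum_(S : {set 'I_n}) \sum_(T : {set 'I_n} | symdiff S T == U)
               A S * B T * blade_sign S T].

Definition blade (S : {set 'I_n}) : mv := [ffun U => (U == S)%:R].
Definition cone : mv := blade set0.

Definition cscale (c : R) (A : mv) : mv := [ffun U => c * A U].

Definition scal (A : mv) : R := A set0.

(* A lies in span[e_1,...,e_s] (0-indexed: generators e_i with i < s) *)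
Definition in_span (s : nat) (A : mv) : Prop :=
  forall S : {set 'I_n}, A S != 0 -> S \subset [set i : 'I_n | (i < s)%N].

Fixpoint fl_m (A : mv) (k i : nat) : mv :=
  match i with
  | 0 => cone
  | i'.+1 => let P := cmul A (fl_m A k i') in
             P + cscale (- (k%:R / (i'.+1)%:R) * scal P) cone
  end.

Definition fl_c (A : mv) (k i : nat) : R :=
  match i with
  | 0 => 1
  | i'.+1 => - (k%:R / (i'.+1)%:R) * scal (cmul A (fl_m A k i'))
  end.

Definition fl_poly (A : mv) (k : nat) : {poly R} :=
  'X^k + \sum_(1 <= i < k.+1) fl_c A k i *: 'X^(k - i).

Definition lmul_mx (A : mv) : 'M[R]_#|{: {set 'I_n}}| :=
  \matrix_(i, j) (cmul A (blade (enum_val j))) (enum_val i).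

End Clifford.
Notation mv R n := {ffun {set 'I_n} -> R}.

(* Main.v *)
Require Import Defs.
From HB Require Import structures.
From mathcomp Require Import all_boot all_order all_algebra.
From mathcomp Require Import fingroup perm zify complex.
Set Implicit Arguments. Unset Strict Implicit. Unset Printing Implicit Defensive.
Import Order.TTheory GRing.Theory Num.Theory.
Local Open Scope ring_scope.

Section DerivProd.
Variable (R : comNzRingType).

Lemma deriv_prod_set (I : finType) (F : I -> {poly R}) (A : {set I}) :
  (\prod_(i in A) F i)^`() =
  \sum_(j in A) \prod_(i in A) (if i == j then (F i)^`() else F i).
Proof.
move Hk : #|A| => k; elim: k A Hk => [|k IH] A Hk.
  have -> : A = set0 by apply/eqP; rewrite -cards_eq0 Hk.
  by rewrite !big_set0 -polyC1 derivC.
have [x Ax] : exists x, x \in A by apply/set0Pn; rewrite -card_gt0 Hk.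
rewrite (big_setD1 x Ax) /= derivM (IH (A :\ x)); last first.
  by move: Hk; rewrite (cardsD1 x A) Ax; case.
rewrite [in RHS](big_setD1 x Ax) /= (big_setD1 x Ax) /= eqxx.
congr (_ + _).
  congr (_ * _); apply: eq_bigr => i; rewrite in_setD1 => /andP[/negPf -> _] //.
rewrite big_distrr /=; apply: eq_bigr => j; rewrite in_setD1 => /andP[jx jA].
by rewrite (big_setD1 x Ax) /= eq_sym (negPf jx).
Qed.

Lemma deriv_prod (I : finType) (F : I -> {poly R}) :
  (\prod_i F i)^`() = \sum_j \prod_i (if i == j then (F i)^`() else F i).
Proof.
have := deriv_prod_set F setT.
have E (G : I -> {poly R}) : \prod_(i in setT) G i = \prod_i G i.
  by apply: eq_bigl => i; rewrite in_setT.
rewrite E => ->.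
rewrite (eq_bigl predT) => [|i]; last by rewrite in_setT.
by apply: eq_bigr => j _; rewrite E.
Qed.

Lemma deriv_det n (A : 'M[{poly R}]_n) :
  (\det A)^`() =
  \sum_j \det (\matrix_(a, b) if a == j then (A a b)^`() else A a b).
Proof.
rewrite /determinant.
rewrite (big_morph _ (@derivD _) (deriv0 _)) exchange_big /=.
apply: eq_bigr => s _.
have -> : ((-1) ^+ perm.odd_perm s * \prod_i A i (s i))^`() =
          (-1) ^+ perm.odd_perm s * (\prod_i A i (s i))^`().
  by case: (perm.odd_perm s); rewrite ?expr1 ?expr0 ?mulN1r ?mul1r ?derivN.
rewrite deriv_prod big_distrr /=.
apply: eq_bigr => j _; congr (_ * _); apply: eq_bigr => i _.
by rewrite mxE.
Qed.

Lemma char_poly_deriv n (M : 'M[R]_n) :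
  (char_poly M)^`() = \tr (\adj (char_poly_mx M)).
Proof.
rewrite /char_poly deriv_det /mxtrace; apply: eq_bigr => j _.
rewrite mxE (expand_det_row _ j) (bigD1 j) //= big1 ?addr0.
  rewrite !mxE eqxx /= derivB derivMn derivX derivC subr0 mul1r.
  rewrite /cofactor; congr (_ * \det _); apply/matrixP => a b.
  by rewrite !mxE eq_sym (negPf (neq_lift j a)).
move=> k kj; rewrite !mxE eqxx /= derivB derivMn derivX derivC subr0.
by rewrite eq_sym (negPf kj) mulr0n mul0r.
Qed.

End DerivProd.

Fixpoint mfl (F : fieldType) N (M : 'M[F]_N) (i : nat) : 'M[F]_N :=
  if i is i'.+1 then
    M *m mfl M i' + (- ((i'.+1)%:R^-1 * \tr (M *m mfl M i')))%:M
  else 1%:M.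

Definition flcm (F : fieldType) N (M : 'M[F]_N) (i : nat) : F :=
  if i is i'.+1 then - ((i'.+1)%:R^-1 * \tr (M *m mfl M i')) else 1.

Lemma mflS (F : fieldType) N (M : 'M[F]_N) i :
  mfl M i.+1 = M *m mfl M i + (flcm M i.+1)%:M.
Proof. by []. Qed.

Section FL.
Variables (F : fieldType) (N : nat) (M : 'M[F]_N).
Hypothesis char0 : forall m, (m.+1)%:R != 0 :> F.

Let Ad := \adj (char_poly_mx M).
Let p := char_poly M.
Definition Qc t : 'M[F]_N := \matrix_(a, b) (Ad a b)`_t.

Lemma Qrec t : (if t is t'.+1 then Qc t' else 0) - M *m Qc t = (p`_t)%:M.
Proof.
have := mul_mx_adj (char_poly_mx M); move/matrixP => H.
apply/matrixP => a b; have := H a b; rewrite !mxE.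
move/(congr1 (fun q : {poly F} => q`_t)).
have -> : \sum_j char_poly_mx M a j * \adj (char_poly_mx M) j b =
   'X * Ad a b - \sum_j (M a j)%:P * Ad j b.
  rewrite (eq_bigr (fun j => 'X *+ (a == j) * Ad j b - (M a j)%:P * Ad j b)).
    rewrite sumrB; congr (_ - _).
    rewrite (bigD1 a) //= big1 ?addr0 ?eqxx ?mulr1n //.
    by move=> j ja; rewrite eq_sym (negPf ja) mulr0n mul0r.
  by move=> j _; rewrite !mxE mulrBl.
rewrite coefB coefXM coef_sum coefMn => <-.
rewrite mxE; congr (_ - _).
  by case: t => [|t] /=; rewrite ?mxE.
by apply: eq_bigr => j _; rewrite coefCM mxE.
Qed.

Lemma p_size : size p = N.+1.
Proof. exact: size_char_poly. Qed.

Lemma Qc_big t : (N <= t)%N -> Qc t = 0.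
Proof.
pose T := (\max_(ab : 'I_N * 'I_N) size (Ad ab.1 ab.2))%N.
have HT u : (T <= u)%N -> Qc u = 0.
  move=> Tu; apply/matrixP => a b; rewrite !mxE nth_default //.
  apply: leq_trans Tu; rewrite /T.
  have := (@leq_bigmax _ (fun ab : 'I_N * 'I_N => size (Ad ab.1 ab.2)) (a, b)).
  by rewrite /= mxE.
have H : forall e u, (N <= u)%N -> (T <= u + e)%N -> Qc u = 0.
  elim => [|e IH] u Nu Tu; first by apply: HT; rewrite addn0 in Tu.
  have := Qrec u.+1.
  rewrite (IH u.+1) ?addSnnS ?(leqW Nu) // mulmx0 subr0 => ->.
  rewrite nth_default ?p_size //.
  by apply/matrixP => a b; rewrite !mxE mul0rn.
by move=> Nt; apply: (H T t Nt (leq_addl _ _)).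
Qed.

Lemma trQ t : \tr (Qc t) = p`_t.+1 *+ t.+1.
Proof.
rewrite -coef_deriv char_poly_deriv /mxtrace coef_sum.
by apply: eq_bigr => i _; rewrite mxE.
Qed.

Lemma p_lead : p`_N = 1.
Proof.
have := char_poly_monic M; rewrite monicE => /eqP.
by rewrite lead_coefE p_size.
Qed.

Theorem FL_main i : (i <= N)%N ->
  mfl M i = (if (i < N)%N then Qc (N - i.+1) else 0) /\
  ((0 < i)%N -> flcm M i = p`_(N - i)).
Proof.
elim: i => [|i IH] HiN.
  split => //=; case: ltnP => HN.
    have := Qrec (N.-1).+1; rewrite /= prednK // (Qc_big (leqnn N)) mulmx0 subr0 p_lead.
    by rewrite subn1 => ->.
  by apply/matrixP => a; have := leq_trans (ltn_ord a) HN.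
have HiN' : (i < N)%N by [].
have [IH1 _] := IH (ltnW HiN).
rewrite HiN' in IH1.
set t := (N - i.+1)%N in IH1.
have Nt : N = (t + i.+1)%N by rewrite /t subnK.
pose Z := if t is t'.+1 then Qc t' else 0.
have HZ : Z = (if (i.+1 < N)%N then Qc (N - i.+2) else 0).
  rewrite /Z; case E: t => [|t'].
    by have -> : (i.+1 < N)%N = false by move: Nt; rewrite E; lia.
  have -> : (i.+1 < N)%N = true by move: Nt; rewrite E; lia.
  by have -> : (N - i.+2)%N = t' by move: Nt; rewrite E; lia.
have trZ : \tr Z = p`_t *+ t.
  by rewrite /Z; case: (t) => [|t']; rewrite ?trQ // mxtrace0 mulr0n.
have HMQ : M *m Qc t = Z - (p`_t)%:M.
  by rewrite -(Qrec t) opprB addrC subrK.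
have Hc : flcm M i.+1 = p`_t.
  rewrite /= IH1 HMQ raddfB /= trZ mxtrace_scalar Nt mulrnDr.
  by rewrite opprD addrA subrr add0r mulrN opprK -[p`_t *+ _]mulr_natl mulKf.
split; last by move=> _; rewrite Hc.
by rewrite mflS Hc IH1 HMQ subrK HZ.
Qed.

Lemma mfl_N : mfl M N = 0.
Proof. by have [-> _] := FL_main (leqnn N); rewrite ltnn. Qed.

Lemma flcm_coef i : (0 < i <= N)%N -> flcm M i = p`_(N - i).
Proof. by case/andP => i0 iN; have [_ ->] := FL_main iN. Qed.

Lemma char_poly_flcm : char_poly M = \poly_(t < N.+1) flcm M (N - t).
Proof.
apply/polyP => t; rewrite coef_poly; case: ltnP => Ht.
  have [->|tN] := eqVneq t N; first by rewrite subnn p_lead.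
  rewrite flcm_coef; last by move: tN; rewrite -ltnS; lia.
  by have -> : (N - (N - t) = t)%N by lia.
by rewrite nth_default // p_size.
Qed.

End FL.

Section FLgen.
Variable (F : fieldType).

Lemma mfl_poly N (M : 'M[F]_N) i :
  mfl M i = \sum_(j < i.+1) flcm M j *: M ^+ (i - j).
Proof.
elim: i => [|i IH].
  by rewrite big_ord1 /= expr0 scale1r.
rewrite mflS [in RHS]big_ord_recr subnn expr0 scalemx1 IH; congr (_ + _).
rewrite mulmx_sumr; apply: eq_bigr => j _.
rewrite -scalemxAr mulmxE -exprS subSn //; exact: (ltn_ord j).
Qed.

Lemma flcm_rec N (M : 'M[F]_N) i :
  flcm M i.+1 = - ((i.+1)%:R^-1 *
                   \sum_(j < i.+1) flcm M j * \tr (M ^+ (i.+1 - j))).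
Proof.
rewrite /= mfl_poly mulmx_sumr raddf_sum /=; congr (- (_ * _)).
apply: eq_bigr => j _.
by rewrite -scalemxAr mxtraceZ mulmxE -exprS subSn //; exact: (ltn_ord j).
Qed.

Lemma flcm_tr_eq N1 N2 (M1 : 'M[F]_N1) (M2 : 'M[F]_N2) :
  (forall t, \tr (M1 ^+ t) = \tr (M2 ^+ t)) -> forall i, flcm M1 i = flcm M2 i.
Proof.
move=> Htr i; elim/ltn_ind: i => [[|i]] IH //.
rewrite !flcm_rec; congr (- (_ * _)); apply: eq_bigr => j _.
by rewrite IH // Htr.
Qed.

Lemma char_poly_tr_eq N (M1 M2 : 'M[F]_N) :
  (forall m, (m.+1)%:R != 0 :> F) ->
  (forall t, \tr (M1 ^+ t) = \tr (M2 ^+ t)) -> char_poly M1 = char_poly M2.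
Proof.
move=> c0 Htr; rewrite !char_poly_flcm //.
by apply: eq_poly => t _; apply: flcm_tr_eq.
Qed.

End FLgen.

Lemma mfl_comm (F : fieldType) N (M : 'M[F]_N) i : M * mfl M i = mfl M i * M.
Proof.
elim: i => [|i IH] /=; first by rewrite mulr1 mul1r.
rewrite -!mulmxE mulmxDr mulmxDl scalar_mxC; congr (_ + _).
by rewrite !mulmxE -[RHS]mulrA -IH.
Qed.

Fixpoint bsz (K j : nat) : nat := if j is j'.+1 then (bsz K j' + bsz K j')%N else K.

Fixpoint bdiag (F : fieldType) K (M : 'M[F]_K) j : 'M[F]_(bsz K j) :=
  match j return 'M[F]_(bsz K j) with
  | 0 => M
  | j'.+1 => block_mx (bdiag M j') 0 0 (bdiag M j')
  end.

Section Bdiag.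
Variable (F : fieldType).

Lemma bsz_eq K j : bsz K j = (K * 2 ^ j)%N.
Proof. by elim: j => [|j IH] /=; rewrite ?muln1 // IH expnS; lia. Qed.

Lemma blk_pow m (D : 'M[F]_m) t :
  (block_mx D 0 0 D : 'M_(m + m)) ^+ t = block_mx (D ^+ t) 0 0 (D ^+ t).
Proof.
elim: t => [|t IH]; first by rewrite !expr0; exact: (scalar_mx_block m m 1).
rewrite exprS IH -!mulmxE mulmx_block !mulmx0 !mul0mx !addr0 !add0r.
by rewrite !mulmxE -!exprS.
Qed.

Lemma bdiag_pow K (M : 'M[F]_K) j t : (bdiag M j) ^+ t = bdiag (M ^+ t) j.
Proof. by elim: j => [|j IH] //=; rewrite blk_pow IH. Qed.

Lemma tr_bdiag K (M : 'M[F]_K) j : \tr (bdiag M j) = \tr M *+ (2 ^ j).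
Proof.
elim: j => [|j IH] /=; first by rewrite mulr1n.
by rewrite mxtrace_block IH expnS mul2n -addnn mulrnDr.
Qed.

Lemma charpoly_bdiag K (M : 'M[F]_K) j :
  char_poly (bdiag M j) = char_poly M ^+ (2 ^ j).
Proof.
elim: j => [|j IH] /=; first by rewrite expr1.
move: IH; rewrite /char_poly char_block_diag_mx det_ublock => ->.
by rewrite -exprD addnn -mul2n -expnS.
Qed.

Lemma char_poly_tr_eq' N1 N2 (M1 : 'M[F]_N1) (M2 : 'M[F]_N2) :
  N1 = N2 -> (forall m, (m.+1)%:R != 0 :> F) ->
  (forall t, \tr (M1 ^+ t) = \tr (M2 ^+ t)) -> char_poly M1 = char_poly M2.
Proof. by move=> e; subst N2; apply: char_poly_tr_eq. Qed.

End Bdiag.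

Section GenRing.
Variables (T : pzRingType) (g : nat -> T) (sg : nat -> bool) (m0 : nat).
Hypothesis anti : forall a b, (a < m0)%N -> (b < m0)%N -> a != b ->
  g a * g b = - (g b * g a).
Hypothesis sq : forall a, (a < m0)%N -> g a * g a = (-1) ^+ (~~ sg a).

Definition xg (P : nat -> bool) j := if P j then g j else 1.
Definition G m P := \prod_(j < m) xg P j.

Lemma G_S m P : G m.+1 P = G m P * xg P m.
Proof. by rewrite /G big_ord_recr. Qed.

Lemma G0 P : G 0 P = 1.
Proof. by rewrite /G big_ord0. Qed.

Lemma signCr (x : T) n : (-1) ^+ n * x = x * (-1) ^+ n.
Proof. exact: (esym (commr_sign x n)). Qed.

Lemma comm_G m a P : (m <= m0)%N -> (a < m0)%N ->
  g a * G m P = (-1) ^+ (\sum_(j < m) (P j && (j != a :> nat)))%N * (G m P * g a).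
Proof.
move=> + Ha; elim: m => [|m IH] Hm.
  by rewrite G0 big_ord0 expr0 mul1r mulr1 mul1r.
have Hm' : (m < m0)%N by [].
have key : g a * xg P m = (-1) ^+ (P m && (m != a)) * (xg P m * g a).
  rewrite /xg; case: (P m) => /=; last by rewrite mulr1 mul1r expr0 mul1r.
  case: eqP => [->|/eqP ne]; first by rewrite expr0 mul1r.
  by rewrite expr1 mulN1r anti // eq_sym.
rewrite G_S big_ord_recr /= exprD mulrA IH ?(ltnW Hm) //.
rewrite -!mulrA key; congr (_ * _).
by rewrite !mulrA signCr -!mulrA.
Qed.

Definition E m (P Q : nat -> bool) : nat :=
  (\sum_(a < m) \sum_(b < m) (P a && Q b && (b < a)%N)
   + \sum_(a < m) (P a && Q a && ~~ sg a))%N.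

Lemma E0 P Q : E 0 P Q = 0%N.
Proof. by rewrite /E !big_ord0. Qed.

Lemma E_S m P Q : E m.+1 P Q =
  (E m P Q + \sum_(b < m) (P m && Q b) + (P m && Q m && ~~ sg m))%N.
Proof.
rewrite /E big_ord_recr /= [X in (_ + X)%N]big_ord_recr /=.
have -> : (\sum_(i < m) \sum_(b < m.+1) (P i && Q b && (b < i)) =
          \sum_(a < m) \sum_(b < m) (P a && Q b && (b < a)))%N.
  apply: eq_bigr => i _; rewrite big_ord_recr /= ltnNge (ltnW (ltn_ord i)).
  by rewrite andbF addn0.
rewrite big_ord_recr /= ltnn andbF addn0.
have -> : (\sum_(i < m) (P m && Q i && (i < m)) =
          \sum_(b < m) (P m && Q b))%N.
  by apply: eq_bigr => i _; rewrite /= ltn_ord andbT.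
by rewrite -!addnA; congr (_ + _); rewrite addnCA.
Qed.

Lemma xg_G m P Q : (m < m0)%N ->
  xg P m * G m Q = (-1) ^+ (\sum_(b < m) (P m && Q b))%N * (G m Q * xg P m).
Proof.
move=> Hm; rewrite /xg; case: (P m) => /=.
  rewrite comm_G ?(ltnW Hm) //; congr ((-1) ^+ _ * _).
  by apply: eq_bigr => j _; rewrite (ltn_eqF (ltn_ord j)) andbT.
by rewrite big1 // expr0 mul1r mulr1 mul1r.
Qed.

Lemma G_mul m P Q : (m <= m0)%N ->
  G m P * G m Q = (-1) ^+ (E m P Q) * G m (fun j => P j (+) Q j).
Proof.
elim: m => [|m IH] Hm; first by rewrite !G0 E0 !mulr1.

have Hm' : (m < m0)%N by [].
have Hxx : xg P m * xg Q m =
   (-1) ^+ (P m && Q m && ~~ sg m) * xg (fun j => P j (+) Q j) m.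
  rewrite /xg; case: (P m); case: (Q m) => /=;
    rewrite ?expr0 ?mul1r ?mulr1 ?andbF //.
  by rewrite sq.
have Hsgn : forall (a b c : nat) (X Y : T),
    (-1) ^+ a * ((-1) ^+ b * X * ((-1) ^+ c * Y)) = (-1) ^+ (a + b + c) * (X * Y).
  move=> a b c X Y; rewrite !mulrA -[_ * X * _]mulrA (commr_sign X) !mulrA.
  by rewrite -!exprD.
rewrite !G_S E_S mulrA -[G m P * xg P m * G m Q]mulrA xg_G //.
have -> : forall s, G m P * ((-1) ^+ s * (G m Q * xg P m)) * xg Q m =
    (-1) ^+ s * ((G m P * G m Q) * (xg P m * xg Q m)).
  by move=> s; rewrite !mulrA (commr_sign (G m P)).
rewrite IH ?(ltnW Hm) // Hxx Hsgn; congr ((-1) ^+ _ * _); lia.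
Qed.

End GenRing.

Section TrZero.
Variables (F : fieldType) (K : nat) (g : nat -> 'M[F]_K) (m0 : nat).
Hypothesis anti : forall a b, (a < m0)%N -> (b < m0)%N -> a != b ->
  g a * g b = - (g b * g a).
Hypothesis sqs : forall a, (a < m0)%N -> exists b : bool, g a * g a = (-1) ^+ b.
Hypothesis two : 2%:R != 0 :> F.

Lemma trG0 m a (P : nat -> bool) : (m <= m0)%N -> (a < m0)%N ->
  odd (\sum_(j < m) (P j && (j != a :> nat)))%N -> \tr (G g m P) = 0.
Proof.
move=> Hm Ha Hodd.
have H := comm_G anti P Hm Ha.
rewrite -signr_odd Hodd expr1 mulN1r in H.
set Y := G g m P in H *.
have Hz : \tr (Y * (g a * g a)) = 0.
  have e1 : \tr (Y * (g a * g a)) = \tr (g a * (Y * g a)).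
    by rewrite mulrA -!mulmxE mxtrace_mulC.
  have e2 : \tr (g a * (Y * g a)) = - \tr (Y * (g a * g a)).
    by rewrite mulrA H mulNr raddfN mulrA.
  move: e1; rewrite e2 => /eqP; rewrite -addr_eq0 -mulr2n -mulr_natl.
  by rewrite mulf_eq0 (negPf two) => /eqP.
have [b Hb] := sqs Ha.
move: Hz; rewrite Hb (commr_sign Y) mulr_sign; case: (b) => //.
by rewrite raddfN => /eqP; rewrite oppr_eq0 => /eqP.
Qed.

Lemma trG_nonempty (P : nat -> bool) : ~~ odd m0 -> (exists2 j, (j < m0)%N & P j) ->
  \tr (G g m0 P) = 0.
Proof.
move=> Hev [j0 Hj0 Pj0].
set c := (\sum_(j < m0) P j)%N.
case Hc: (odd c).
  case: (pickP (fun j : 'I_m0 => ~~ P j)) => [a Pa | allP]; last first.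
    have : c = m0.
      rewrite /c (eq_bigr (fun _ => 1%N)) ?sum1_card ?card_ord //.
      by move=> i _; have := allP i; rewrite /=; case: (P i).
    by move=> E; rewrite E in Hc; rewrite Hc in Hev.
  apply: (@trG0 m0 a) => //; rewrite (eq_bigr (fun j : 'I_m0 => (P j : nat))) //.
  move=> j _; case: eqP => [/val_inj ->|]; last by rewrite andbT.
  by rewrite (negPf Pa).
apply: (@trG0 m0 j0) => //.
pose j0' := Ordinal Hj0.
have E1 : c = (P j0 + \sum_(i < m0 | i != j0') P i)%N by rewrite /c (bigD1 j0').
have E2 : (\sum_(j < m0) (P j && (j != j0 :> nat)))%N = (\sum_(i < m0 | i != j0') P i)%N.
  rewrite (bigD1 j0') //= eqxx andbF add0n; apply: eq_bigr => i.
  by rewrite -val_eqE /= => ->; rewrite andbT.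
by rewrite E2; move: Hc; rewrite E1 Pj0 add1n oddS => /negbFE.
Qed.

End TrZero.

Section JW.
Variables (F : fieldType) (im : F).
Hypothesis Him : im * im = -1.

Fixpoint sz h := if h is h'.+1 then (sz h' + sz h')%N else 1%N.

Definition Dm n (A : 'M[F]_n) : 'M[F]_(n + n) := block_mx A 0 0 (- A).
Definition Xm n : 'M[F]_(n + n) := block_mx 0 1%:M 1%:M 0.
Definition Ym n : 'M[F]_(n + n) := block_mx 0 (- 1%:M) 1%:M 0.

Fixpoint fam (sg : nat -> bool) h : nat -> 'M[F]_(sz h) :=
  match h with
  | 0 => fun _ => 0
  | h'.+1 => fun j => if (j < h'.*2)%N then Dm (fam sg h' j)
      else if j == h'.*2 then (if sg j then 1 else im) *: Xm (sz h')
      else (if sg j then im else 1) *: Ym (sz h')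
  end.

Lemma one_block n : (1 : 'M[F]_(n + n)) = block_mx 1 0 0 1.
Proof. exact: (scalar_mx_block n n 1). Qed.

Lemma DmM n (A B : 'M[F]_n) : Dm A * Dm B = block_mx (A * B) 0 0 (A * B).
Proof.
rewrite -mulmxE mulmx_block !mulmx0 !mul0mx !addr0 !add0r mulmxN mulNmx opprK.
by rewrite mulmxE.
Qed.

Lemma Dm_anti n (A B : 'M[F]_n) : A * B = - (B * A) -> Dm A * Dm B = - (Dm B * Dm A).
Proof. by move=> H; rewrite !DmM H opp_block_mx oppr0. Qed.

Lemma Dm_sq n (A : 'M[F]_n) (b : bool) : A * A = (-1) ^+ b -> Dm A * Dm A = (-1) ^+ b.
Proof.
move=> H; rewrite DmM H; case: (b) => /=; rewrite ?expr0 ?expr1 one_block //.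
by rewrite opp_block_mx oppr0.
Qed.

Lemma DX n (A : 'M[F]_n) : Dm A * Xm n = - (Xm n * Dm A).
Proof.
rewrite -!mulmxE !mulmx_block; rewrite ?(mulmx0, mul0mx, addr0, add0r, mulmxN, mulNmx, mulmx1, mul1mx, opprK, oppr0, opp_block_mx) //.
Qed.

Lemma DY n (A : 'M[F]_n) : Dm A * Ym n = - (Ym n * Dm A).
Proof.
rewrite -!mulmxE !mulmx_block; rewrite ?(mulmx0, mul0mx, addr0, add0r, mulmxN, mulNmx, mulmx1, mul1mx, opprK, oppr0, opp_block_mx) //.
Qed.

Lemma XY n : Xm n * Ym n = - (Ym n * Xm n).
Proof.
rewrite -!mulmxE !mulmx_block; rewrite ?(mulmx0, mul0mx, addr0, add0r, mulmxN, mulNmx, mulmx1, mul1mx, opprK, oppr0, opp_block_mx) //.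
Qed.

Lemma XX n : Xm n * Xm n = 1.
Proof.
rewrite -!mulmxE !mulmx_block !mulmx0 !mul0mx !addr0 !add0r !mulmx1.
by rewrite one_block.
Qed.

Lemma YY n : Ym n * Ym n = -1.
Proof.
rewrite -!mulmxE !mulmx_block !mulmx0 !mul0mx !addr0 !add0r !mulmxN !mulmx1.
by rewrite one_block opp_block_mx oppr0.
Qed.

Lemma scale_anti n (A B : 'M[F]_n) c d : A * B = - (B * A) ->
  (c *: A) * (d *: B) = - ((d *: B) * (c *: A)).
Proof.
by move=> H; rewrite -!mulmxE -!scalemxAl -!scalemxAr !mulmxE H !scalerN scalerA mulrC scalerA.
Qed.

Lemma anti_sym n (A B : 'M[F]_n) : A * B = - (B * A) -> B * A = - (A * B).
Proof. by move=> ->; rewrite opprK. Qed.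

Lemma fam_rel sg h :
  (forall a b, (a < h.*2)%N -> (b < h.*2)%N -> a != b ->
     fam sg h a * fam sg h b = - (fam sg h b * fam sg h a)) /\
  (forall a, (a < h.*2)%N -> fam sg h a * fam sg h a = (-1) ^+ (~~ sg a)).
Proof.
elim: h => [|h [IHa IHs]]; first by split.
have famS j : fam sg h.+1 j = if (j < h.*2)%N then Dm (fam sg h j)
      else if j == h.*2 then (if sg j then 1 else im) *: Xm (sz h)
      else (if sg j then im else 1) *: Ym (sz h) by [].
split.
  have key : forall a b, (a < b)%N -> (b < h.+1.*2)%N ->
     fam sg h.+1 a * fam sg h.+1 b = - (fam sg h.+1 b * fam sg h.+1 a).
    move=> a b ab bh; rewrite !famS.
    have ah : (a < h.+1.*2)%N by apply: ltn_trans bh.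
    case: (ltnP b h.*2) => Hb.
      rewrite (ltn_trans ab Hb); apply: Dm_anti; apply: IHa => //.
        exact: ltn_trans ab Hb.
      by rewrite neq_ltn ab.
    case: (ltnP a h.*2) => Ha.
      by case: (b == h.*2); [have := scale_anti 1 (if sg b then 1 else im) (DX (fam sg h a))
        | have := scale_anti 1 (if sg b then im else 1) (DY (fam sg h a))]; rewrite scale1r.
    have Ea : a = h.*2 by apply/eqP; rewrite eqn_leq Ha -ltnS (leq_trans ab) //;
      move: bh; rewrite doubleS; lia.
    have Eb : b = h.*2.+1 by move: bh ab; rewrite doubleS Ea; lia.
    rewrite Ea Eb eqxx (gtn_eqF (ltnSn _)); apply: scale_anti; exact: XY.
  move=> a b Ha Hb ab; case: (ltngtP a b) => [lt|gt|eq]; first exact: key.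
    by apply: anti_sym; apply: key.
  by rewrite eq eqxx in ab.
move=> a Ha; rewrite famS; case: (ltnP a h.*2) => Ha'.
  by apply: Dm_sq; apply: IHs.
case: eqP => _.
  rewrite -!mulmxE -!scalemxAl -!scalemxAr !mulmxE XX scalerA.
  by case: (sg a); rewrite /= ?mulr1 ?scale1r ?expr0 // Him expr1 scaleN1r.
rewrite -!mulmxE -!scalemxAl -!scalemxAr !mulmxE YY scalerA.
by case: (sg a); rewrite /= ?Him ?mulr1 ?scaleN1r ?scale1r ?opprK ?expr0 ?expr1.
Qed.

Lemma sz_exp h : sz h = (2 ^ h)%N.
Proof. by elim: h => //= h ->; rewrite expnS mul2n addnn. Qed.

End JW.

Section Cliff.
Variables (R : realFieldType) (n : nat) (sig : 'I_n -> bool).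
Local Notation mv := {ffun {set 'I_n} -> R}.
Local Notation C := (complex R).
Local Notation toC := (real_complex R).

Definition fS (S : {set 'I_n}) (j : nat) : bool :=
  if (insub j : option 'I_n) is Some i then i \in S else false.
Definition sgN (j : nat) : bool :=
  if (insub j : option 'I_n) is Some i then sig i else true.

Lemma fS_ord S (i : 'I_n) : fS S i = (i \in S).
Proof. by rewrite /fS valK. Qed.

Lemma sgN_ord (i : 'I_n) : sgN i = sig i.
Proof. by rewrite /sgN valK. Qed.

Lemma fS_supp (S : {set 'I_n}) s : (forall i : 'I_n, i \in S -> (i < s)%N) ->
  forall j, (s <= j)%N -> fS S j = false.
Proof.
move=> H j sj; rewrite /fS; case: insubP => [i _ Hi|//].
by apply/negP => /H; rewrite Hi ltnNge sj.
Qed.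

Lemma fS_n (S : {set 'I_n}) j : (n <= j)%N -> fS S j = false.
Proof. by apply: fS_supp => i _; exact: ltn_ord. Qed.

Lemma sum_ord_n (P : 'I_n -> nat) :
  (\sum_(i : 'I_n) P i)%N = (\sum_(i < n) P i)%N.
Proof. by []. Qed.

Lemma blade_sign_E (S T : {set 'I_n}) :
  @blade_sign R n sig S T = (-1) ^+ E sgN n (fS S) (fS T).
Proof.
rewrite /blade_sign /E exprD; congr (_ * _).
  congr (_ ^+ _); rewrite -sum1_card big_mkcond /=.
  rewrite (pair_big predT predT (fun (a b : 'I_n) =>
     (fS S a && fS T b && (b < a)%N : nat))) /=.
  by apply: eq_bigr => [[a b]] _; rewrite !fS_ord !inE /=; case: (_ && _ && _).
rewrite (eq_bigr (fun i => (-1) ^+ (~~ sig i))); last first.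
  by move=> i _; rewrite /gsq; case: (sig i).
rewrite prodrXr; congr (_ ^+ _); rewrite big_mkcond; apply: eq_bigr => i _.
by rewrite inE !fS_ord sgN_ord; case: (_ && _).
Qed.


Lemma scaleAl K (A B : 'M[C]_K) (c : C) : c *: (A * B) = (c *: A) * B.
Proof. by rewrite -!mulmxE scalemxAl. Qed.
Lemma scaleAr K (A B : 'M[C]_K) (c : C) : c *: (A * B) = A * (c *: B).
Proof. by rewrite -!mulmxE scalemxAr. Qed.

Lemma charC m : (m.+1)%:R != 0 :> C.
Proof. by rewrite -(rmorph_nat toC) fmorph_eq0 pnatr_eq0. Qed.

Lemma fS_symdiff S T j : fS (symdiff S T) j = fS S j (+) fS T j.
Proof.
rewrite /fS; case: insub => // i; rewrite /symdiff !inE.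
by case: (i \in S); case: (i \in T).
Qed.

Lemma fS_set0 j : fS set0 j = false.
Proof. by rewrite /fS; case: insub => // i; rewrite inE. Qed.

Lemma symdiff_eq0 (S T : {set 'I_n}) : (symdiff S T == set0) = (S == T).
Proof.
apply/eqP/eqP => [H|->]; last by rewrite /symdiff setDv setU0.
apply/setP => i; have := congr1 (fun A : {set 'I_n} => i \in A) H; rewrite /symdiff !inE.
by case: (i \in S); case: (i \in T).
Qed.

Lemma symdiff0S (S : {set 'I_n}) : symdiff set0 S = S.
Proof. by rewrite /symdiff set0D setD0 set0U. Qed.

Lemma span_supp s (X : mv) S : in_span s X -> X S != 0 ->
  forall i : 'I_n, i \in S -> (i < s)%N.
Proof. by move=> HX XS i iS; have := subsetP (HX S XS) i iS; rewrite inE. Qed.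

Lemma symdiff_sub s (S T : {set 'I_n}) :
  S \subset [set i : 'I_n | (i < s)%N] -> T \subset [set i : 'I_n | (i < s)%N] ->
  symdiff S T \subset [set i : 'I_n | (i < s)%N].
Proof.
move=> /subsetP HS /subsetP HT; apply/subsetP => i; rewrite /symdiff !inE.
by case/orP => /andP[_ H]; [have := HS i H | have := HT i H]; rewrite inE.
Qed.

Lemma span_cmul s (X Y : mv) : in_span s X -> in_span s Y -> in_span s (cmul sig X Y).
Proof.
move=> HX HY U; rewrite ffunE => H.
apply: contraNT H => HU; apply/eqP; apply: big1 => S _; apply: big1 => T /eqP HST.
have [XS|XS] := eqVneq (X S) 0; first by rewrite XS !mul0r.
have [YT|YT] := eqVneq (Y T) 0; first by rewrite YT mulr0 mul0r.
by move: HU; rewrite -HST symdiff_sub //; [apply: HX | apply: HY].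
Qed.

Lemma span_add s (X Y : mv) : in_span s X -> in_span s Y -> in_span s (X + Y).
Proof.
move=> HX HY U; rewrite ffunE => H.
have [XU|XU] := eqVneq (X U) 0; last exact: HX.
by apply: HY; rewrite XU add0r in H.
Qed.

Lemma span_scale s c (X : mv) : in_span s X -> in_span s (cscale c X).
Proof. by move=> HX U; rewrite ffunE mulf_eq0 negb_or => /andP[_ /HX]. Qed.

Lemma span_blade s (T : {set 'I_n}) : T \subset [set i : 'I_n | (i < s)%N] ->
  in_span s (blade R T).
Proof. by move=> HT U; rewrite ffunE; case: (U =P T) => [-> _ //|_]; rewrite /= eqxx. Qed.

Lemma span_cone s : in_span s (cone R n).
Proof. by apply: span_blade; apply/subsetP => i; rewrite inE. Qed.

Lemma span_n (X : mv) : in_span n X.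
Proof. by move=> S _; apply/subsetP => i _; rewrite inE. Qed.

Lemma span_flm s (A : mv) k i : in_span s A -> in_span s (fl_m sig A k i).
Proof.
move=> HA; elim: i => [|i IH] /=; first exact: span_cone.
by apply: span_add; [apply: span_cmul | apply: span_scale; apply: span_cone].
Qed.

Lemma cmul_blade0 (X : mv) T : (cmul sig X (blade R T)) set0 = X T * @blade_sign R n sig T T.
Proof.
rewrite ffunE (bigD1 T) //= [X in _ + X]big1 ?addr0 => [|S ST].
  rewrite (big_pred1 T) => [|U]; first by rewrite ffunE eqxx mulr1.
  by rewrite /= symdiff_eq0 eq_sym.
apply: big1 => U; rewrite symdiff_eq0 => /eqP SU.
by rewrite ffunE -SU (negPf ST) mulr0 mul0r.
Qed.

Section Rho.
Variables (K : nat) (g : nat -> 'M[C]_K) (s m0 : nat).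
Hypothesis anti : forall a b, (a < m0)%N -> (b < m0)%N -> a != b ->
  g a * g b = - (g b * g a).
Hypothesis sq : forall a, (a < m0)%N -> g a * g a = (-1) ^+ (~~ sgN a).
Hypothesis sm0 : (s <= m0)%N.
Hypothesis sn : (s <= n)%N.
Hypothesis m0ev : ~~ odd m0.
Hypothesis K0 : (K%:R : C) != 0.

Definition rho (X : mv) : 'M[C]_K := \sum_S toC (X S) *: G g n (fS S).

Lemma G_ext m (P Q : nat -> bool) : (forall j, P j = Q j) -> G g m P = G g m Q.
Proof. by move=> H; apply: eq_bigr => j _; rewrite /xg H. Qed.

Lemma G_trunc (P : nat -> bool) : (forall j, (s <= j)%N -> P j = false) ->
  forall m, (s <= m)%N -> G g m P = G g s P.
Proof.
move=> HP m sm; rewrite -(subnK sm); elim: (m - s)%N => [|d IH]; first by rewrite add0n.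
by rewrite addSn G_S IH /xg HP ?mulr1 // leq_addl.
Qed.

Lemma E_trunc (P Q : nat -> bool) : (forall j, (s <= j)%N -> P j = false) ->
  forall m, (s <= m)%N -> E sgN m P Q = E sgN s P Q.
Proof.
move=> HP m sm; rewrite -(subnK sm); elim: (m - s)%N => [|d IH]; first by rewrite add0n.
rewrite addSn E_S IH (HP (d + s)%N) ?leq_addl //= big1 ?addn0 //.
Qed.

Lemma G_mul_n (S T : {set 'I_n}) :
  (forall i : 'I_n, i \in S -> (i < s)%N) -> (forall i : 'I_n, i \in T -> (i < s)%N) ->
  G g n (fS S) * G g n (fS T) =
  (-1) ^+ E sgN n (fS S) (fS T) * G g n (fS (symdiff S T)).
Proof.
move=> HS HT.
have hS := fS_supp HS; have hT := fS_supp HT.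
have hST : forall j, (s <= j)%N -> fS (symdiff S T) j = false.
  by move=> j sj; rewrite fS_symdiff hS ?hT.
rewrite !(G_trunc _ sn) // (E_trunc _ _ sn) //.
rewrite (G_mul anti sq) //; congr (_ * _); apply: G_ext => j.
by rewrite fS_symdiff.
Qed.

Lemma sign_scale (e : nat) (M : 'M[C]_K) : (-1) ^+ e * M = ((-1) ^+ e : C) *: M.
Proof. by rewrite -signr_odd -[in RHS]signr_odd mulr_sign scaler_sign. Qed.

Lemma rho_mul (X Y : mv) : in_span s X -> in_span s Y ->
  rho (cmul sig X Y) = rho X * rho Y.
Proof.
move=> HX HY; rewrite /rho.
under eq_bigr => U _ do rewrite ffunE rmorph_sum scaler_suml.
rewrite exchange_big /=.
rewrite mulr_suml; apply: eq_bigr => S _.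
under eq_bigr => U _ do rewrite rmorph_sum scaler_suml.
rewrite (exchange_big_dep xpredT) //= mulr_sumr; apply: eq_bigr => T _.
rewrite (big_pred1 (symdiff S T)); last by move=> U; rewrite /= eq_sym.
rewrite -scaleAl -scaleAr scalerA.
have [XS|XS] := eqVneq (X S) 0; first by rewrite XS !(rmorph0, mulr0, mul0r, scale0r).
have [YT|YT] := eqVneq (Y T) 0; first by rewrite YT !(rmorph0, mulr0, mul0r, scale0r).
rewrite G_mul_n; [|exact: span_supp HX XS|exact: span_supp HY YT].
rewrite sign_scale scalerA blade_sign_E !rmorphM rmorph_sign.
by rewrite [_ * (-1) ^+ _]mulrC.
Qed.

Lemma G_set0 m : G g m (fS set0) = 1.
Proof. by apply: big1 => j _; rewrite /xg fS_set0. Qed.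

Lemma rho_blade T : rho (blade R T) = G g n (fS T).
Proof.
rewrite /rho (bigD1 T) //= big1 ?addr0 => [|S ST].
  by rewrite ffunE eqxx rmorph1 scale1r.
by rewrite ffunE (negPf ST) rmorph0 scale0r.
Qed.

Lemma rho_cone : rho (cone R n) = 1.
Proof. by rewrite /cone rho_blade G_set0. Qed.

Lemma rho_add (X Y : mv) : rho (X + Y) = rho X + rho Y.
Proof.
by rewrite /rho -big_split; apply: eq_bigr => S _; rewrite ffunE rmorphD scalerDl.
Qed.

Lemma rho_scale c (X : mv) : rho (cscale c X) = toC c *: rho X.
Proof.
by rewrite /rho scaler_sumr; apply: eq_bigr => S _; rewrite ffunE rmorphM scalerA.
Qed.

Lemma rho_opp (X : mv) : rho (- X) = - rho X.
Proof.
by rewrite /rho -sumrN; apply: eq_bigr => S _; rewrite ffunE rmorphN scaleNr.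
Qed.

Lemma rho0 : rho 0 = 0.
Proof. by rewrite /rho big1 // => S _; rewrite ffunE rmorph0 scale0r. Qed.

Lemma two0 : 2%:R != 0 :> C.
Proof. exact: charC 1. Qed.

Lemma tr_rho (X : mv) : in_span s X -> \tr (rho X) = K%:R * toC (X set0).
Proof.
move=> HX; rewrite /rho raddf_sum (bigD1 set0) //= big1 ?addr0.
  by rewrite mxtraceZ G_set0 mxtrace1 mulrC.
move=> S S0; have [XS|XS] := eqVneq (X S) 0.
  by rewrite XS rmorph0 scale0r mxtrace0.
have HS := span_supp HX XS.
rewrite mxtraceZ (G_trunc (fS_supp HS) sn) -(G_trunc (fS_supp HS) sm0).
rewrite (@trG_nonempty _ _ g m0 anti) ?mulr0 //.
- by move=> a Ha; exists (~~ sgN a); apply: sq.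
- exact: two0.
- have [i iS] := set0Pn _ S0; exists i; last by rewrite fS_ord.
  by apply: leq_trans sm0; apply: HS.
Qed.

Lemma rho_inj (X : mv) : in_span s X -> rho X = 0 -> X = 0.
Proof.
move=> HX H0; apply/ffunP => T; rewrite ffunE.
apply/eqP; apply: contraT => XT.
have HT := span_supp HX XT.
have sp_b : in_span s (blade R T).
  by apply: span_blade; apply/subsetP => i /HT; rewrite inE.
have := tr_rho (span_cmul HX sp_b); rewrite rho_mul // H0 mul0r mxtrace0.
move/esym/eqP; rewrite mulf_eq0 (negPf K0) /= fmorph_eq0 cmul_blade0.
by rewrite mulf_eq0 (negPf XT) blade_sign_E signr_eq0.
Qed.

Lemma rho_flm (A : mv) k i : in_span s A -> (k%:R : C) = K%:R ->
  rho (fl_m sig A k i) = mfl (rho A) i /\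
  (toC (fl_c sig A k i) = flcm (rho A) i).
Proof.
move=> HA Hk; elim: i => [|i [IH _]].
  by rewrite /= rho_cone rmorph1; split.
have HP := span_cmul HA (@span_flm s A k i HA).
have Hc : toC (fl_c sig A k i.+1) = flcm (rho A) i.+1.
  rewrite /= -IH mulmxE -rho_mul //; last exact: span_flm.
  rewrite (tr_rho HP) -Hk.
  rewrite rmorphM rmorphN rmorphM fmorphV !rmorph_nat /scal.
  by rewrite mulNr mulrA [_ * k%:R]mulrC.
split => //; rewrite mflS -Hc /= rho_add rho_scale rho_cone.
by rewrite rho_mul //; [rewrite IH mulmxE scalemx1 | exact: span_flm].
Qed.

End Rho.
End Cliff.

Lemma Him (R : realFieldType) : ('i%C : R[i]) * 'i%C = -1.
Proof.
apply/eqP; rewrite eq_complex /=.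
by rewrite !(mul0r, mulr0, mul1r, mulr1, add0r, addr0, sub0r, oppr0) !eqxx.
Qed.

Lemma uphalf_le s : (s <= (uphalf s).*2)%N.
Proof.
rewrite uphalfE; have := odd_double_half s.+1.
case: (odd s.+1) => /=; lia.
Qed.

Lemma uphalf_le2 s : (0 < s)%N -> (uphalf s <= s)%N.
Proof.
rewrite uphalfE; have := odd_double_half s.+1.
rewrite -!muln2; case: (odd s.+1) => /=; lia.
Qed.

Section Main.
Variables (R : realFieldType) (n : nat) (sig : 'I_n -> bool).
Local Notation mv := {ffun {set 'I_n} -> R}.
Local Notation C := (complex R).
Local Notation toC := (real_complex R).

Definition gF h : nat -> 'M[C]_(sz h) := fam ('i%C : C) (sgN sig) h.

Lemma gF_anti h : forall a b, (a < h.*2)%N -> (b < h.*2)%N -> a != b ->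
     gF h a * gF h b = - (gF h b * gF h a).
Proof. exact: (fam_rel (@Him R) (sgN sig) h).1. Qed.

Lemma gF_sq h : forall a, (a < h.*2)%N -> gF h a * gF h a = (-1) ^+ (~~ sgN sig a).
Proof. exact: (fam_rel (@Him R) (sgN sig) h).2. Qed.

Lemma gF_ev h : ~~ odd h.*2.
Proof. by rewrite odd_double. Qed.

Lemma gF_K0 h : ((sz h)%:R : C) != 0.
Proof. by rewrite sz_exp -(prednK (expn_gt0 2 h)) charC. Qed.

Local Notation hN := (uphalf n).
Local Notation rF := (@rho R n _ (gF hN)).
Let snF : (n <= hN.*2)%N := uphalf_le n.

Lemma rF_mul (X Y : mv) : rF (cmul sig X Y) = rF X * rF Y.
Proof. exact: (rho_mul (@gF_anti hN) (@gF_sq hN) snF (leqnn n) (span_n (X:=X)) (span_n (X:=Y))). Qed.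

Lemma rF_inj (X Y : mv) : rF X = rF Y -> X = Y.
Proof.
move=> H; apply/eqP; rewrite -subr_eq0; apply/eqP.
apply: (rho_inj (@gF_anti hN) (@gF_sq hN) snF (leqnn n) (@gF_ev hN) (@gF_K0 hN) (span_n (X:=X-Y))).
by rewrite rho_add rho_opp H subrr.
Qed.

Lemma cmulA (X Y Z : mv) : cmul sig (cmul sig X Y) Z = cmul sig X (cmul sig Y Z).
Proof. by apply: rF_inj; rewrite !rF_mul mulrA. Qed.

Lemma cmul1r (X : mv) : cmul sig (cone R n) X = X.
Proof. by apply: rF_inj; rewrite rF_mul rho_cone mul1r. Qed.

Lemma cmulr1 (X : mv) : cmul sig X (cone R n) = X.
Proof. by apply: rF_inj; rewrite rF_mul rho_cone mulr1. Qed.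

Lemma cmul_scaler c (X Y : mv) : cmul sig X (cscale c Y) = cscale c (cmul sig X Y).
Proof. by apply: rF_inj; rewrite rF_mul !rho_scale rF_mul -scaleAr. Qed.

Lemma cmul_scalel c (X Y : mv) : cmul sig (cscale c X) Y = cscale c (cmul sig X Y).
Proof. by apply: rF_inj; rewrite rF_mul !rho_scale rF_mul -scaleAl. Qed.

Lemma cmulr0 (X : mv) : cmul sig X 0 = 0.
Proof. by apply: rF_inj; rewrite rF_mul rho0 mulr0. Qed.


Definition cpow (A : mv) t := iter t (cmul sig A) (cone R n).

Lemma cmul_expand (X Z : mv) W :
  (cmul sig X Z) W = \sum_U (cmul sig X (blade R U)) W * Z U.
Proof.
rewrite ffunE; under [RHS]eq_bigr => U _ do rewrite ffunE mulr_suml.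
rewrite exchange_big /=; apply: eq_bigr => S _.
under [RHS]eq_bigr => U _ do rewrite mulr_suml.
rewrite [RHS]exchange_big /=; apply: eq_bigr => T _.
rewrite (bigD1 T) //= big1 ?addr0 => [|U UT].
  by rewrite ffunE eqxx mulr1 mulrAC.
by rewrite ffunE eq_sym (negPf UT) mulr0 mul0r mul0r.
Qed.

Lemma sum_enum (F : {set 'I_n} -> R) :
  \sum_U F U = \sum_(l < #|{: {set 'I_n}}|) F (enum_val l).
Proof. by rewrite -big_enum_val; apply: eq_bigl => x; rewrite inE. Qed.

Lemma lmul_mul (X Y : mv) :
  lmul_mx sig (cmul sig X Y) = lmul_mx sig X *m lmul_mx sig Y.
Proof.
apply/matrixP => i j; rewrite !mxE cmulA cmul_expand sum_enum.
by apply: eq_bigr => l _; rewrite !mxE.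
Qed.

Lemma lmul_cone : lmul_mx sig (cone R n) = 1%:M.
Proof.
by apply/matrixP => i j; rewrite !mxE cmul1r ffunE (inj_eq enum_val_inj).
Qed.

Lemma lmul_pow (A : mv) t : lmul_mx sig (cpow A t) = (lmul_mx sig A) ^+ t.
Proof.
elim: t => [|t IH]; first by rewrite expr0 lmul_cone.
by rewrite /cpow iterS -/(cpow A t) lmul_mul IH exprS mulmxE.
Qed.

Lemma blade_sign0l U : @blade_sign R n sig set0 U = 1.
Proof.
rewrite /blade_sign set0I big_set0 mulr1.
rewrite (_ : [set ij | _] = set0) ?cards0 ?expr0 //.
by apply/setP => ij; rewrite !inE.
Qed.

Lemma symdiff_eqr (S U : {set 'I_n}) : (symdiff S U == U) = (S == set0).
Proof.
apply/eqP/eqP => [H|->]; last by rewrite symdiff0S.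
apply/setP => i; have := congr1 (fun A : {set 'I_n} => i \in A) H.
by rewrite /symdiff !inE; case: (i \in S); case: (i \in U).
Qed.

Lemma cmul_bladeU (X : mv) U : (cmul sig X (blade R U)) U = X set0.
Proof.
rewrite ffunE (bigD1 set0) //= [X in _ + X]big1 ?addr0 => [|S S0].
  rewrite (big_pred1 U) => [|T]; last by rewrite /= symdiff0S.
  by rewrite ffunE eqxx mulr1 blade_sign0l mulr1.
apply: big1 => T /eqP HT; rewrite ffunE; case: (T =P U) => [TU|_].
  by move: S0; rewrite -(symdiff_eqr S U) -{1}TU HT eqxx.
by rewrite mulr0 mul0r.
Qed.

Lemma card_sets : #|{: {set 'I_n}}| = (2 ^ n)%N.
Proof. by rewrite -cardsT -powersetT card_powerset cardsT card_ord. Qed.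

Lemma tr_lmul (X : mv) : \tr (lmul_mx sig X) = (2 ^ n)%:R * X set0.
Proof.
rewrite /mxtrace; under eq_bigr => i _ do rewrite mxE cmul_bladeU.
by rewrite sumr_const card_ord card_sets mulr_natl.
Qed.

Lemma span_opp s (X : mv) : in_span s X -> in_span s (- X).
Proof. by move=> HX U; rewrite ffunE oppr_eq0; apply: HX. Qed.

Lemma span_cpow s (A : mv) t : in_span s A -> in_span s (cpow A t).
Proof.
move=> HA; elim: t => [|t IH]; first exact: span_cone.
by rewrite /cpow iterS; apply: span_cmul.
Qed.

Lemma flmS (A : mv) k i :
  fl_m sig A k i.+1 = cmul sig A (fl_m sig A k i) + cscale (fl_c sig A k i.+1) (cone R n).
Proof. by []. Qed.

Lemma cscaleA a b (X : mv) : cscale a (cscale b X) = cscale (a * b) X.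
Proof. by apply/ffunP => U; rewrite !ffunE mulrA. Qed.

Lemma cscale1 (X : mv) : cscale 1 X = X.
Proof. by apply/ffunP => U; rewrite !ffunE mul1r. Qed.

Lemma cscale0 (X : mv) : cscale 0 X = 0.
Proof. by apply/ffunP => U; rewrite !ffunE mul0r. Qed.

Lemma addr_eq0_cscale (P : mv) c : P + cscale c (cone R n) = 0 -> P = cscale (- c) (cone R n).
Proof.
move/eqP; rewrite addr_eq0 => /eqP ->.
by apply/ffunP => U; rewrite !ffunE mulNr.
Qed.

Lemma cone_neq0 : cone R n != 0.
Proof. by apply/eqP => /ffunP /(_ set0); rewrite !ffunE eqxx => /eqP; rewrite oner_eq0. Qed.

Lemma fl_poly_coef (c : nat -> R) k t : c 0%N = 1 ->
  ('X^k + \sum_(1 <= i < k.+1) c i *: 'X^(k - i))`_t =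
  if (t < k.+1)%N then c (k - t)%N else 0.
Proof.
move=> c0; rewrite coefD coefXn coef_sum.
under eq_bigr => i _ do rewrite coefZ coefXn.
rewrite big_seq_cond.
case: ltnP => Ht.
  have [Etk|Ntk] := eqVneq t k.
    rewrite Etk subnn c0 big1 ?addr0 // => i /andP[Hi _].
    by move: Hi; rewrite mem_index_iota => Hi; rewrite (_ : (k == k - i)%N = false) ?mulr0 //; lia.
  rewrite add0r -big_seq_cond (bigD1_seq (k - t)%N) /=; last exact: iota_uniq.
    rewrite (_ : (t == k - (k - t))%N = true) ?mulr1; last by apply/eqP; lia.
    rewrite big_seq_cond big1 ?addr0 // => i /andP[Hi ne].
    by move: Hi ne; rewrite mem_index_iota => Hi ne; rewrite (_ : (t == k - i)%N = false) ?mulr0 //; lia.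
  by rewrite mem_index_iota; lia.
rewrite (_ : (t == k) = false) ?add0r; last by lia.
rewrite big1 // => i /andP[Hi _].
by move: Hi; rewrite mem_index_iota => Hi; rewrite (_ : (t == k - i)%N = false) ?mulr0 //; lia.
Qed.

Lemma poly_flcm_eq N (M : 'M[C]_N) (A : mv) k :
  N = k -> (forall i, flcm M i = toC (fl_c sig A k i)) ->
  \poly_(t < N.+1) flcm M (N - t) = map_poly toC (fl_poly sig A k).
Proof.
move=> Ek Hf; subst k; apply/polyP => t.
rewrite coef_poly coef_map /= /fl_poly fl_poly_coef //.
by case: ltnP => _; rewrite ?Hf ?rmorph0.
Qed.

Section Thm.
Variables (s : nat) (A : mv).
Hypothesis Hs : (1 <= s <= n)%N.
Hypothesis HA : in_span s A.

Local Notation h := (uphalf s).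
Local Notation k := (2 ^ uphalf s)%N.
Local Notation rS := (@rho R n _ (gF h)).

Let sh : (s <= h.*2)%N := uphalf_le s.
Let sn : (s <= n)%N. Proof. by case/andP: Hs. Qed.
Let Hk : (k%:R : C) = (sz h)%:R. Proof. by rewrite sz_exp. Qed.

Lemma rS_mul (X Y : mv) : in_span s X -> in_span s Y -> rS (cmul sig X Y) = rS X * rS Y.
Proof. exact: (rho_mul (@gF_anti h) (@gF_sq h) sh sn). Qed.

Lemma rS_inj (X Y : mv) : in_span s X -> in_span s Y -> rS X = rS Y -> X = Y.
Proof.
move=> HX HY H; apply/eqP; rewrite -subr_eq0; apply/eqP.
apply: (rho_inj (@gF_anti h) (@gF_sq h) sh sn (@gF_ev h) (@gF_K0 h)).
  by apply: span_add => //; apply: span_opp.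
by rewrite rho_add rho_opp H subrr.
Qed.

Lemma rS_flm i : rS (fl_m sig A k i) = mfl (rS A) i /\
  toC (fl_c sig A k i) = flcm (rS A) i.
Proof. exact: (rho_flm (@gF_anti h) (@gF_sq h) sh sn (@gF_ev h) i HA Hk). Qed.

Lemma span0 : in_span s (0 : mv).
Proof. by move=> U; rewrite ffunE eqxx. Qed.

Lemma part_a : fl_m sig A k k = 0.
Proof.
apply: rS_inj; [exact: span_flm | exact: span0 |].
rewrite rho0 (rS_flm k).1 (_ : k = sz h) ?sz_exp //.
exact: mfl_N (@charC R).
Qed.

Lemma k_gt0 : (0 < k)%N.
Proof. by rewrite expn_gt0. Qed.

Lemma flm_last : cmul sig A (fl_m sig A k k.-1) = cscale (- fl_c sig A k k) (cone R n).
Proof.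
have := flmS A k k.-1; rewrite (prednK k_gt0) part_a => /esym.
exact: addr_eq0_cscale.
Qed.

Lemma flm_comm i : cmul sig A (fl_m sig A k i) = cmul sig (fl_m sig A k i) A.
Proof.
apply: rS_inj; try by apply: span_cmul => //; apply: span_flm.
rewrite !rS_mul //; try exact: span_flm.
by case: (rS_flm i) => -> _; rewrite mfl_comm.
Qed.

Lemma part_b : fl_c sig A k k != 0 ->
  let B := cscale (- (fl_c sig A k k)^-1) (fl_m sig A k k.-1) in
  cmul sig A B = cone R n /\ cmul sig B A = cone R n.
Proof.
move=> ck B; have H1 : cmul sig A B = cone R n.
  rewrite /B cmul_scaler flm_last cscaleA mulrN mulNr opprK mulVf //.
  exact: cscale1.
split => //; rewrite /B cmul_scalel -flm_comm -cmul_scaler; exact: H1.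
Qed.



Lemma part_c : fl_c sig A k k = 0 ->
  ~ exists B : mv, cmul sig A B = cone R n /\ cmul sig B A = cone R n.
Proof.
move=> ck [B [AB BA]].
have kill : forall X, cmul sig A X = 0 -> X = 0.
  by move=> X H; rewrite -(cmul1r X) -BA cmulA H cmulr0.
have Hdown : forall d, (d < k)%N -> fl_m sig A k (k.-1 - d) = 0.
  elim => [|d IH] Hd.
    by rewrite subn0; apply: kill; rewrite flm_last ck oppr0 cscale0.
  have kpos := k_gt0.
  set j := (k.-1 - d.+1)%N.
  have Ej : (k.-1 - d = j.+1)%N by rewrite /j; lia.
  have H := IH (ltnW Hd); rewrite Ej flmS in H.
  move/addr_eq0_cscale: H => HP.
  suff cz : fl_c sig A k j.+1 = 0 by apply: kill; rewrite HP cz oppr0 cscale0.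
  set c := fl_c sig A k j.+1 in HP *.
  have E : c = (k%:R / j.+1%:R) * c.
    rewrite {1}/c /fl_c HP /scal !ffunE eqxx mulr1.
    by rewrite mulrN mulNr opprK.
  move: E => /eqP; rewrite -subr_eq0 -{1}[c]mul1r -mulrBl mulf_eq0.
  case/orP => [|/eqP //]; rewrite subr_eq0 eq_sym => /eqP H1.
  have jn0 : (j.+1%:R : R) != 0 by rewrite pnatr_eq0.
  have : (k%:R : R) = (j.+1)%:R by rewrite -[LHS](divfK jn0) H1 mul1r.
  move/eqP; rewrite eqr_nat => /eqP Ekj.
  by move: Hd; rewrite /j in Ekj; lia.
have := Hdown k.-1; rewrite subnn /= => H0.
by move: cone_neq0; rewrite H0 ?eqxx // prednK // k_gt0.
Qed.

Lemma rS_pow t : rS (cpow A t) = (rS A) ^+ t.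
Proof.
elim: t => [|t IH]; first by rewrite expr0 rho_cone.
by rewrite /cpow iterS rS_mul // ?IH ?exprS //; apply: span_cpow.
Qed.

Lemma map_mxX N (M : 'M[R]_N) t : map_mx toC (M ^+ t) = (map_mx toC M) ^+ t.
Proof.
elim: t => [|t IH]; first by rewrite !expr0 map_mx1.
by rewrite !exprS -!mulmxE map_mxM IH.
Qed.

Lemma part_d : char_poly (lmul_mx sig A) = fl_poly sig A k ^+ (2 ^ n %/ k).
Proof.
have hn : (h <= n)%N.
  by case/andP: Hs => s1 sn'; apply: leq_trans sn'; apply: uphalf_le2.
rewrite -(expnB (ltn0Sn 1) hn).
apply: (map_poly_inj toC); rewrite map_char_poly rmorphXn /=.
rewrite -(@poly_flcm_eq _ (rS A) A k (sz_exp h) (fun i => esym (rS_flm i).2)).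
rewrite -char_poly_flcm; last exact: charC.
rewrite -charpoly_bdiag; apply: char_poly_tr_eq'.
- by rewrite card_sets bsz_eq sz_exp -expnD subnKC.
- exact: charC.
move=> t; rewrite bdiag_pow tr_bdiag -map_mxX trace_map_mx -lmul_pow tr_lmul.
rewrite -rS_pow (tr_rho (@gF_anti h) (@gF_sq h) sh sn (@gF_ev h)); last exact: span_cpow.
rewrite rmorphM rmorph_nat /= -mulrnAl -mulrnA sz_exp -expnD subnKC //.
Qed.
End Thm.
End Main.

Unset Implicit Arguments.

Theorem theorem3 (R : realFieldType) (n : nat) (sig : 'I_n -> bool)
    (s : nat) (A : mv R n) :
  (1 <= s <= n)%N -> in_span s A ->
  let k := (2 ^ uphalf s)%N in
  [/\ fl_m sig A k k = 0,
      (fl_c sig A k k != 0 ->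
         let B := cscale (- (fl_c sig A k k)^-1) (fl_m sig A k k.-1) in
         cmul sig A B = cone R n /\ cmul sig B A = cone R n),
      (fl_c sig A k k = 0 ->
         ~ exists B : mv R n, cmul sig A B = cone R n /\ cmul sig B A = cone R n)
    & char_poly (lmul_mx sig A) = fl_poly sig A k ^+ (2 ^ n %/ k)].
Proof.
move=> Hs HA k.
split.
- exact: part_a.
- exact: part_b.
- exact: part_c.
- exact: part_d.
Qed.
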